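(* Let $T$ be a tree with $\sigma(T)=\tau_{\mathrm{ind}}(T)$, and let $I\subseteq V(T)$ be a minimum independent vertex cover of $T$. Suppose $T$ has a critical edge. Then there exists a pendant edge $e^{\ast}\in T$ whose leaf endpoint is contained in $I$ such that $\sigma(T\setminus e^{\ast})\le\sigma(T)-1$.
   Context: For a graph $F$, $|F|$ is its number of edges and $F-I$ the subgraph induced on $V(F)\setminus I$. The crosscut number is $\sigma(F)=\min\{|I|+|F-I| : I\text{ independent in }F\}$. For bipartite $F$, $\tau_{\mathrm{ind}}(F)$ is the minimum size of $S\subseteq V(F)$ with $|S\cap e|=1$ for every edge $e$; a minimum independent vertex cover is an independent set meeting every edge, of minimum size among such sets. For an edge $e$, $T\setminus e$ is $T$ with edge $e$ deleted (vertices kept); $e$ is critical if $\sigma(T\setminus e)\le\sigma(T)-1$. A pendant edge is an edge with an endpoint of degree $1$ (a leaf). *)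

(* Defs.v *)
From mathcomp Require Import all_boot.
Set Implicit Arguments. Unset Strict Implicit. Unset Printing Implicit Defensive.

(* A simple graph on a finite vertex type V is a symmetric irreflexive
   relation g : rel V.  Edges are the 2-element vertex sets {u,v} with g u v. *)

Section Graphs.
Variable V : finType.

Definition edges (g : rel V) : {set {set V}} :=
  [set A : {set V} | [exists u, exists v, g u v && (A == [set u; v])]].

Definition nedges (g : rel V) : nat := #|edges g|.

Definition independent (g : rel V) (I : {set V}) : bool :=
  [forall u in I, forall v in I, ~~ g u v].

Definition nedges_outside (g : rel V) (I : {set V}) : nat :=
  #|[set A in edges g | [disjoint A & I]]|.

(* crosscut number sigma(F) = min { |I| + |F - I| : I independent }.
   The empty set is independent with value nedges g, so the default
   nedges g of the iterated min does not affect the value. *)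
Definition sigma (g : rel V) : nat :=
  \big[minn/nedges g]_(I : {set V} | independent g I) (#|I| + nedges_outside g I).

Definition exact_transversal (g : rel V) (S : {set V}) : bool :=
  [forall A in edges g, #|S :&: A| == 1].

(* tau_ind(F) = min |S| with |S ∩ e| = 1 for every edge e (F bipartite;
   default #|V| is irrelevant whenever such an S exists). *)
Definition tau_ind (g : rel V) : nat :=
  \big[minn/#|V|]_(S : {set V} | exact_transversal g S) #|S|.

Definition ind_vertex_cover (g : rel V) (I : {set V}) : bool :=
  independent g I && [forall A in edges g, ~~ [disjoint A & I]].

Definition min_ind_vertex_cover (g : rel V) (I : {set V}) : Prop :=
  ind_vertex_cover g I /\
  forall J : {set V}, ind_vertex_cover g J -> #|I| <= #|J|.

Definition del_edge (g : rel V) (A : {set V}) : rel V :=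
  fun x y => g x y && ([set x; y] != A).

Definition critical (g : rel V) (A : {set V}) : Prop :=
  A \in edges g /\ sigma (del_edge g A) + 1 <= sigma g.

Definition deg (g : rel V) (x : V) : nat := #|[set y | g x y]|.

Definition connected (g : rel V) : Prop := forall x y : V, connect g x y.

Definition acyclic (g : rel V) : Prop :=
  forall c : seq V, uniq c -> cycle g c -> size c < 3.

Definition is_tree (g : rel V) : Prop :=
  [/\ symmetric g, irreflexive g, 0 < #|V|, connected g & acyclic g].

End Graphs.

(* Main.v *)
Require Import Defs.
From mathcomp Require Import all_boot zify.
Set Implicit Arguments. Unset Strict Implicit. Unset Printing Implicit Defensive.

Section Forest.
Variable V : finType.
Variable h : rel V.
Hypothesis hsym : symmetric h.
Hypothesis hirr : irreflexive h.
Hypothesis hacyc : acyclic h.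

Lemma no_min_deg2 (X : {set V}) :
  X != set0 -> (forall x, x \in X -> 1 < #|[set y in X | h x y]|) -> False.
Proof.
move=> /set0Pn [x0 x0X] hdeg.
have step : forall n, exists x p, [/\ x \in X, uniq (x :: p), path h x p & n < size (x :: p)].
  elim=> [|n [x [p [xX up pp szp]]]].
    by exists x0, [::].
  have [w /and3P [wX hxw wne]] : exists w, [&& w \in X, h x w & w != head x p].
    case: (boolP [exists w, [&& w \in X, h x w & w != head x p]]) => [/existsP //|/existsPn Hn].
    exfalso.
    have : #|[set y in X | h x y]| <= #|[set head x p]|.
      apply: subset_leq_card; apply/subsetP => y; rewrite inE => /andP [yX hxy].
      move: (Hn y); rewrite yX hxy /= negbK => /eqP ->; by rewrite inE.
    by rewrite cards1 leqNgt hdeg.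
  case: (boolP (w \in x :: p)) => wxp.
    move: wxp; rewrite in_cons => /orP [/eqP wx|wp].
      by move: hxw; rewrite wx hirr.
    exfalso.
    case/splitPr: wp up pp wne => p1 p2 up pp wne.
    case: p1 up pp wne => [|y p1] up pp wne; first by rewrite /= eqxx in wne.
    have := hacyc (c := x :: rcons (y :: p1) w).
    have -> : uniq (x :: rcons (y :: p1) w).
      move: up; rewrite -cat_rcons -cat_cons cat_uniq; by case/andP.
    have -> : cycle h (x :: rcons (y :: p1) w).
      rewrite /cycle rcons_path last_rcons (hsym w x) hxw andbT rcons_path.
      move: pp; rewrite cat_path => /andP [-> /=]; by move/andP=> [].
    move=> H; move: (H isT isT); by rewrite /= size_rcons.
  exists w, (x :: p); split => //.
    by rewrite /= wxp.
  by rewrite /= hsym hxw.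
have [x [p [_ up _ sz]]] := step #|V|.
move: (card_uniqP up) => e.
by move: (max_card (mem (x :: p))); rewrite e leqNgt sz.
Qed.

Lemma edgesP (E : {set V}) :
  reflect (exists a b, h a b /\ E = [set a; b]) (E \in edges h).
Proof.
rewrite /edges inE; apply: (iffP existsP).
  by move=> [a /existsP [b /andP [hab /eqP ->]]]; exists a, b.
by move=> [a [b [hab ->]]]; exists a; apply/existsP; exists b; rewrite hab eqxx.
Qed.

Lemma memEI (E Y : {set V}) :
  (E \in [set E in edges h | E \subset Y]) = (E \in edges h) && (E \subset Y).
Proof. by rewrite [in LHS]in_set. Qed.

Lemma forest_edges_aux n (X : {set V}) :
  #|X| <= n -> X != set0 -> #|[set E in edges h | E \subset X]| < #|X|.
Proof.
elim: n X => [|n IH] X.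
  by rewrite leqn0 cards_eq0 => /eqP ->; rewrite eqxx.
move=> szX Xne.
case: (boolP [exists x in X, #|[set y in X | h x y]| <= 1]); last first.
  move/existsPn => Hn; exfalso; apply: (no_min_deg2 Xne) => x xX.
  by move: (Hn x); rewrite xX /= ltnNge.
case/existsP => x /andP [xX dx].
have cX : #|X| = (#|X :\ x|).+1 by rewrite (cardsD1 x X) xX.
case: (eqVneq (X :\ x) set0) => [X0 | Xne'].
  rewrite cX X0 cards0 ltnS leqn0 cards_eq0; apply/eqP/setP => E; rewrite memEI in_set0.
  apply/negbTE/negP => /andP [/edgesP [a [b [hab ->]]] sub].
  have ha : a = x.
    apply/eqP; apply/negPn/negP => ne.
    have : a \in X :\ x by rewrite !inE ne (subsetP sub) // !inE eqxx.
    by rewrite X0 inE.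
  have hb : b = x.
    apply/eqP; apply/negPn/negP => ne.
    have : b \in X :\ x by rewrite !inE ne (subsetP sub) // !inE eqxx orbT.
    by rewrite X0 inE.
  by move: hab; rewrite ha hb hirr.
have len : #|X :\ x| <= n by rewrite -ltnS -cX.
set D := [set y in X | h x y] in dx *.
have IH' := IH (X :\ x) len Xne'.
have sub : [set E in edges h | E \subset X] \subset
   [set E in edges h | E \subset X :\ x] :|: [set [set x; y] | y in D].
  apply/subsetP => E; rewrite memEI in_setU memEI => /andP [Ee sub].
  case/edgesP: (Ee) => a [b [hab Edef]].
  case: (boolP (x \in E)) => xE; last first.
    rewrite Ee /=; apply/orP; left; apply/subsetP => z zE; rewrite !inE (subsetP sub) // andbT.
    by apply/negP => /eqP zx; move: xE; rewrite -zx zE.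
  apply/orP; right; apply/imsetP.
  move: xE; rewrite Edef !inE => /orP [/eqP xa|/eqP xb].
    exists b; last by rewrite -xa.
    by rewrite !inE xa hab andbT (subsetP sub) // Edef !inE eqxx orbT.
  exists a; last by rewrite -xb setUC.
  by rewrite !inE xb hsym hab andbT (subsetP sub) // Edef !inE eqxx.
have h1 : #|[set E in edges h | E \subset X]| <=
   #|[set E in edges h | E \subset X :\ x]| + #|[set [set x; y] | y in D]|.
  exact: (leq_trans (subset_leq_card sub) (leq_card_setU _ _).1).
have h2 : #|[set [set x; y] | y in D]| <= 1 by exact: (leq_trans (leq_imset_card _ _) dx).
rewrite cX; move: h1 h2 IH'; lia.
Qed.

Lemma forest_edges (X : {set V}) :
  X != set0 -> #|[set E in edges h | E \subset X]| < #|X|.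
Proof. exact: forest_edges_aux. Qed.
End Forest.

Section Main.
Variable V : finType.

Lemma pair_inj (I : {set V}) a b a' b' :
  a \in I -> a' \in I -> b \notin I -> b' \notin I ->
  [set a; b] = [set a'; b'] -> a = a' /\ b = b'.
Proof.
move=> aI a'I bI b'I e.
have : a \in [set a'; b'] by rewrite -e !inE eqxx.
rewrite !inE => /orP [/eqP aa|/eqP ab]; last by move: b'I; rewrite -ab aI.
split=> //.
have : b \in [set a'; b'] by rewrite -e !inE eqxx orbT.
rewrite !inE => /orP [/eqP ba|/eqP //]; by move: bI; rewrite ba a'I.
Qed.

Lemma sum_deg (F : rel V) (IJ : {set V}) :
  #|[set p : V * V | (p.1 \in IJ) && F p.1 p.2]| = \sum_(a in IJ) #|[set b | F a b]|.
Proof.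
rewrite -sum1_card.
under [RHS]eq_bigr => a _ do rewrite -sum1_card.
rewrite pair_big_dep; apply: eq_bigl => -[a b]; by rewrite !inE.
Qed.

Lemma LB (g : rel V) (I : {set V}) u v (J : {set V}) :
  symmetric g -> irreflexive g -> acyclic g ->
  (forall a b, a \in I -> b \in I -> ~~ g a b) ->
  (forall a b, g a b -> (a \in I) || (b \in I)) ->
  u \in I -> v \notin I -> g u v ->
  (forall a, a \in I -> 2 <= deg g a) ->
  independent (del_edge g [set u; v]) J ->
  #|I| <= #|J| + nedges_outside (del_edge g [set u; v]) J.
Proof.
move=> gsym girr gacyc Iind Icov uI vI guv deg2 Jind.
set F := del_edge g [set u; v].
have Fsub : forall a b, F a b -> g a b by move=> a b /andP [].
have Fsym : symmetric F.
  by move=> a b; rewrite /F /del_edge gsym setUC.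
have Firr : irreflexive F by move=> a; rewrite /F /del_edge girr.
have Facyc : acyclic F.
  move=> c uc cc; apply: gacyc => //; exact: (sub_cycle Fsub).
have JF : forall a b, a \in J -> b \in J -> ~~ F a b.
  move=> a b aJ bJ; move/forallP: Jind => /(_ a); rewrite aJ /= => /forallP /(_ b).
  by rewrite bJ.
have notI : forall a b, a \in I -> g a b -> b \notin I.
  by move=> a b aI gab; apply/negP => bI; move: (Iind a b aI bI); rewrite gab.
have degF : forall a, a \in I -> 2 <= #|[set b | F a b]| + (a == u).
  move=> a aI.
  case: (eqVneq a u) => [->|au].
    have sub : [set b | g u b] :\ v \subset [set b | F u b].
      apply/subsetP => b; rewrite !inE => /andP [bv gub].
      rewrite /F /del_edge gub /=; apply/negP => /eqP e.
      have : b \in [set u; v] by rewrite -e !inE eqxx orbT.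
      rewrite !inE (negbTE bv) orbF => /eqP bu.
      by move: gub; rewrite bu girr.
    have := subset_leq_card sub.
    have := cardsD1 v [set b | g u b].
    have := deg2 u uI; rewrite /deg; lia.
  have -> : [set b | F a b] = [set b | g a b].
    apply/setP => b; rewrite !inE /F /del_edge.
    case: (boolP (g a b)) => //= gab; apply/negP => /eqP e.
    have : a \in [set u; v] by rewrite -e !inE eqxx.
    rewrite !inE (negbTE au) /= => /eqP av; by move: vI; rewrite -av aI.
  have := deg2 a aI; rewrite /deg; lia.
set IJ := I :\: J.
set JI := J :\: I.
have hI : #|I :&: J| + #|IJ| = #|I| by rewrite cardsID.
have hJ : #|I :&: J| + #|JI| = #|J| by rewrite setIC cardsID.
case: (eqVneq IJ set0) => [IJ0|IJne].
  by move: hI hJ; rewrite IJ0 cards0; lia.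
set D := [set p : V * V | (p.1 \in IJ) && F p.1 p.2].
set Jp := [set p : V * V | p.2 \in J].
have hsplit : #|D :&: Jp| + #|D :\: Jp| = #|D| by rewrite cardsID.
have hsum : 2 * #|IJ| <= #|D| + 1.
  rewrite /D sum_deg.
  case: (boolP (u \in IJ)) => uIJ.
    rewrite (big_setD1 u uIJ) /=.
    have : \sum_(a in IJ :\ u) 2 <= \sum_(a in IJ :\ u) #|[set b | F a b]|.
      apply: leq_sum => a; rewrite !inE => /and3P [au _ aI].
      by have := degF a aI; rewrite (negbTE au) addn0.
    rewrite sum_nat_const.
    have := cardsD1 u IJ; rewrite uIJ.
    have : u \in I by move: uIJ; rewrite inE => /andP [].
    move=> /degF; rewrite eqxx.
    lia.
  have : \sum_(a in IJ) 2 <= \sum_(a in IJ) #|[set b | F a b]|.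
    apply: leq_sum => a aIJ.
    have aI : a \in I by move: aIJ; rewrite inE => /andP [].
    have au : a != u by apply/negP => /eqP e; move: uIJ; rewrite -e aIJ.
    by have := degF a aI; rewrite (negbTE au) addn0.
  rewrite sum_nat_const; lia.
set X := IJ :|: JI.
have hX : #|X| = #|IJ| + #|JI|.
  rewrite -(cardsUI IJ JI).
  have -> : IJ :&: JI = set0.
    apply/setP => z; rewrite !inE.
    by case: (z \in I); case: (z \in J).
  by rewrite cards0 addn0.
have Xne : X != set0.
  case/set0Pn: IJne => z zIJ; apply/set0Pn; exists z; by rewrite inE zIJ.
have hP : #|D :&: Jp| < #|X|.
  apply: leq_ltn_trans (forest_edges Fsym Firr Facyc Xne).
  have <- : #|[set [set p.1; p.2] | p in D :&: Jp]| = #|D :&: Jp|.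
    apply: card_in_imset => -[a b] [a' b']; rewrite !inE /= => /andP [/andP [/andP [aJ aI] Fab] bJ] /andP [/andP [/andP [a'J a'I] Fab'] b'J] e.
    have [-> ->] := pair_inj aI a'I (notI a b aI (Fsub a b Fab)) (notI a' b' a'I (Fsub a' b' Fab')) e.
    by [].
  apply: subset_leq_card; apply/subsetP => E /imsetP [[a b]]; rewrite !inE /= => /andP [/andP [/andP [aJ aI] Fab] bJ] ->.
  apply/andP; split.
    by apply/existsP; exists a; apply/existsP; exists b; rewrite Fab eqxx.
  apply/subsetP => z; rewrite !inE => /orP [/eqP ->|/eqP ->].
    by rewrite aJ aI.
  by rewrite bJ (notI a b aI (Fsub a b Fab)) orbT.
have hDU : #|D :\: Jp| <= nedges_outside F J.
  have <- : #|[set [set p.1; p.2] | p in D :\: Jp]| = #|D :\: Jp|.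
    apply: card_in_imset => -[a b] [a' b']; rewrite !inE /= => /andP [bJ /andP [/andP [aJ aI] Fab]] /andP [b'J /andP [/andP [a'J a'I] Fab']] e.
    have [-> ->] := pair_inj aI a'I (notI a b aI (Fsub a b Fab)) (notI a' b' a'I (Fsub a' b' Fab')) e.
    by [].
  apply: subset_leq_card; apply/subsetP => E /imsetP [[a b]]; rewrite !inE /= => /andP [bJ /andP [/andP [aJ aI] Fab]] ->.
  apply/andP; split.
    by apply/existsP; exists a; apply/existsP; exists b; rewrite Fab eqxx.
  rewrite disjoint_subset; apply/subsetP => z; rewrite !inE => /orP [/eqP ->|/eqP ->] //.
move: hI hJ hsplit hsum hX hP hDU; lia.
Qed.

End Main.

Lemma bigmin_le (I : finType) (P : pred I) (F : I -> nat) d i :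
  P i -> \big[minn/d]_(j | P j) F j <= F i.
Proof.
move=> Pi.
suff H : forall r, i \in r -> \big[minn/d]_(j <- r | P j) F j <= F i.
  by apply: H; rewrite mem_index_enum.
elim=> // x r IH; rewrite inE big_cons => /orP [/eqP <-|ir].
  by rewrite Pi geq_minl.
case: (P x); last exact: IH.
by rewrite geq_min IH ?orbT.
Qed.

Lemma bigmin_ge (I : finType) (P : pred I) (F : I -> nat) d k :
  k <= d -> (forall j, P j -> k <= F j) -> k <= \big[minn/d]_(j | P j) F j.
Proof.
move=> kd kF; elim/big_ind: _ => // a b ha hb; by rewrite leq_min ha hb.
Qed.

Unset Implicit Arguments.
Theorem proposition2p7 (V : finType) (g : rel V) (I : {set V}) :
  is_tree g ->
  sigma g = tau_ind g ->
  min_ind_vertex_cover g I ->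
  (exists A, critical g A) ->
  exists A : {set V},
    [/\ A \in edges g,
        (exists2 x, x \in A & (deg g x == 1) && (x \in I))
      & sigma (del_edge g A) + 1 <= sigma g].
Proof.
move=> [gsym girr Vpos gconn gacyc] hst [/andP [Iind' Icov'] Imin] [A0 [A0e A0crit]].
have Iind : forall a b, a \in I -> b \in I -> ~~ g a b.
  move=> a b aI bI; move/forallP: Iind' => /(_ a); rewrite aI /= => /forallP /(_ b).
  by rewrite bI.
have Icov : forall a b, g a b -> (a \in I) || (b \in I).
  move=> a b gab; move/forallP: Icov' => /(_ [set a; b]).
  have -> : [set a; b] \in edges g by apply/edgesP; exists a, b.
  move=> /= /negP dis; apply/negPn/negP; rewrite negb_or => /andP [aI bI]; apply: dis.
  rewrite disjoint_subset; apply/subsetP => z; rewrite !inE => /orP [/eqP ->|/eqP ->] //.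
have notI : forall a b, a \in I -> g a b -> b \notin I.
  by move=> a b aI gab; apply/negP => bI; move: (Iind a b aI bI); rewrite gab.
have sigI : sigma g <= #|I|.
  have : sigma g <= #|I| + nedges_outside g I by apply: bigmin_le.
  suff -> : nedges_outside g I = 0 by rewrite addn0.
  apply/eqP; rewrite cards_eq0; apply/eqP/setP => E; rewrite in_set in_set0.
  apply/negP => /andP [/edgesP [a [b [gab ->]]] dis].
  case/orP: (Icov a b gab) => H.
    have aE : a \in [set a; b] by rewrite !inE eqxx.
    by move: (disjointFr dis aE); rewrite H.
  have bE : b \in [set a; b] by rewrite !inE eqxx orbT.
  by move: (disjointFr dis bE); rewrite H.
have tauI : #|I| <= tau_ind g.
  apply: bigmin_ge; first exact: max_card.
  move=> S /forallP St; apply: Imin; apply/andP; split.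
    apply/forallP => a; apply/implyP => aS; apply/forallP => b; apply/implyP => bS.
    apply/negP => gab.
    have e : [set a; b] \in edges g by apply/edgesP; exists a, b.
    move: (St [set a; b]); rewrite e /=.
    have -> : S :&: [set a; b] = [set a; b].
      by apply/setIidPr; apply/subsetP => z; rewrite !inE => /orP [/eqP ->|/eqP ->].
    rewrite cards2; case: (eqVneq a b) => [ab _|//]; by move: gab; rewrite ab girr.
  apply/forallP => E; apply/implyP => Ee; move: (St E); rewrite Ee /= => /eqP c1.
  apply/negP; rewrite -setI_eq0 => /eqP e0.
  by move: c1; rewrite setIC e0 cards0.
case: (boolP [exists x in I, deg g x == 1]) => [/existsP [x /andP [xI /eqP dx]] | /existsPn nleaf].
  have /cards1P [y ey] : #|[set y | g x y]| == 1 by move: dx; rewrite /deg => ->.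
  have gxy : g x y by have := set11 y; rewrite -ey inE.
  have nbr : forall z, g x z -> z = y by move=> z gxz; apply/set1P; rewrite -ey inE.
  exists [set x; y]; split.
  - by apply/edgesP; exists x, y.
  - by exists x; rewrite ?xI ?dx ?andbT // !inE eqxx.
  set F := del_edge g [set x; y].
  have indF : independent F (I :\ x).
    apply/forallP => a; apply/implyP => aI; apply/forallP => b; apply/implyP => bI.
    move: aI bI; rewrite !inE => /andP [_ aI] /andP [_ bI].
    by apply/negP => /andP [gab _]; move: (Iind a b aI bI); rewrite gab.
  have out0 : nedges_outside F (I :\ x) = 0.
    apply/eqP; rewrite cards_eq0; apply/eqP/setP => E; rewrite in_set in_set0.
    apply/negP => /andP [/edgesP [a [b [Fab ->]]] dis].
    case/andP: Fab => gab ne.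
    have aE : a \in [set a; b] by rewrite !inE eqxx.
    have bE : b \in [set a; b] by rewrite !inE eqxx orbT.
    case/orP: (Icov a b gab) => H.
      have ax : a = x.
        apply/eqP; apply/negPn/negP => ax.
        by move: (disjointFr dis aE); rewrite !inE ax H.
      subst a; have := nbr b gab => by_; subst b; by rewrite eqxx in ne.
    have bx : b = x.
      apply/eqP; apply/negPn/negP => bx.
      by move: (disjointFr dis bE); rewrite !inE bx H.
    subst b; rewrite gsym in gab; have := nbr a gab => ay; subst a.
    by rewrite setUC eqxx in ne.
  have : sigma F <= #|I :\ x| + nedges_outside F (I :\ x) by apply: bigmin_le.
  have := cardsD1 x I; rewrite xI out0.
  move: hst sigI tauI; lia.
case/edgesP: A0e => x0 [y0 [gxy0 A0def]].
have [u [v [uI vI guv Adef]]] : exists u v, [/\ u \in I, v \notin I, g u v & A0 = [set u; v]].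
  case/orP: (Icov _ _ gxy0) => H.
    by exists x0, y0; split => //; exact: notI gxy0.
  exists y0, x0; split => //.
  - by apply: notI H _; rewrite gsym.
  - by rewrite gsym.
  - by rewrite A0def setUC.
have deg2 : forall a, a \in I -> 2 <= deg g a.
  move=> a aI.
  have [c gac] : exists c, g a c.
    case: (eqVneq a u) => [->|au]; first by exists v.
    move: (gconn a u) => /connectP [p pp lastp].
    case: p pp lastp => [_ /= ua|c p /= /andP [gac _] _]; last by exists c.
    by move: au; rewrite ua eqxx.
  have d1 : 0 < deg g a by rewrite /deg; apply/card_gt0P; exists c; rewrite inE.
  move: (nleaf a); rewrite aI /= => /eqP; lia.
rewrite Adef in A0crit.
have lb : #|I| <= sigma (del_edge g [set u; v]).
  apply: bigmin_ge; last first.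
    move=> J Jind; exact: LB.
  have := LB (J := set0) gsym girr gacyc Iind Icov uI vI guv deg2.
  have -> : nedges_outside (del_edge g [set u; v]) set0 = nedges (del_edge g [set u; v]).
    rewrite /nedges_outside /nedges; apply: eq_card => E.
    by rewrite in_set -setI_eq0 setI0 eqxx andbT.
  rewrite cards0 add0n; apply.
  by apply/forallP => a; apply/implyP; rewrite inE.
move: A0crit sigI lb; lia.
Qed.
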